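(* Let $\mathbb K$ be a field, $x\in\mathbb K$, $0\le r\le k$, and let $\chi_k^{(r)}$ be the character (trace function) of the module $\mathsf C_k^{(r)}$. Then for $0\le\ell\le k$, $$\chi_k^{(r)}(\mathbf 1_{\ell,k})=\begin{cases}\mathsf m_{\ell,r}=\dim\mathsf C_\ell^{(r)},& r\le\ell,\\ 0,& r>\ell.\end{cases}$$
   Context: A Motzkin $k$-diagram has top vertices $1,\dots,k$ and bottom vertices $1',\dots,k'$, edges each joining two distinct vertices, each vertex on at most one edge, edges planar. $\mathsf M_k(x)$ is the free $\mathbb K$-module on Motzkin $k$-diagrams with product: stack $d_1$ above $d_2$, let $d_3$ join outer vertices connected by a path, $d_1d_2=x^\kappa d_3$ with $\kappa$ the number of closed middle loops. $\mathbf 1_{\ell,k}$ is the diagram with vertical edges $j$—$j'$ for $j\le\ell$ and all other vertices isolated. Motzkin paths: $p=(a_1,\dots,a_k)$, $a_i\in\{-1,0,1\}$, partial sums $\ge0$, rank $\sum a_i$; $\mathcal P_k^r$ those of rank $r$, $\mathsf m_{k,r}=|\mathcal P_k^r|$. Index $i$ with $a_i=1$ is paired with the smallest $j>i$ with $a_i+\dots+a_j=0$ if it exists. 1-factor of $p$: row of vertices $1..k$, paired indices joined by an edge, unpaired $a_i=1$ white, others black. $\mathsf C_k^{(r)}$: free $\mathbb K$-module on $\mathcal P_k^r$ with $d\cdot p=x^{\kappa(d,p)}q$ if $\mathrm{rank}(q)=r$ and $0$ otherwise, where $d$ is placed above the 1-factor of $p$ (bottom vertex $i'$ identified with vertex $i$),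 $\kappa(d,p)$ is the number of closed loops formed, and $q$ is the 1-factor on the top vertices in which two top vertices are joined iff in a common component and a top vertex is white iff its component contains a white vertex of $p$. *)

(* Defs.v *)
From HB Require Import structures.
From mathcomp Require Import all_boot all_order all_algebra.
Set Implicit Arguments. Unset Strict Implicit. Unset Printing Implicit Defensive.
Import Order.TTheory GRing.Theory Num.Theory.
Local Open Scope ring_scope.

(* Motzkin k-diagrams.  Vertices are pairs (b, i) with i : 'I_k (0-indexed,  *)
(* so i stands for vertex i+1); b = true is the top row, b = false the       *)
(* bottom row.  A diagram is given by its partner function (None = isolated). *)
Definition vert (k : nat) := (bool * 'I_k)%type.
Definition mdiag (k : nat) := vert k -> option (vert k).

(* position of a vertex on the boundary of the rectangle, read clockwise:     *)
(* top 1..k left to right, then bottom k'..1'                                 *)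
Definition bpos k (v : vert k) : nat :=
  if v.1 then val v.2 else (2 * k - 1 - val v.2)%N.

(* Being a Motzkin k-diagram: symmetric partner relation, no loops, planar. *)
Definition is_motzkin_diagram k (d : mdiag k) : Prop :=
  (forall u v, d u = Some v -> d v = Some u) /\
  (forall u, d u <> Some u) /\
  (forall a b c e, d a = Some b -> d c = Some e ->
     ~ [/\ bpos a < bpos c, bpos c < bpos b & bpos b < bpos e]%N).

(* the diagram 1_{l,k}: vertical edges j -- j' for j <= l (0-indexed: j < l) *)
Definition one_lk (l k : nat) : mdiag k :=
  fun v => if (val v.2 < l)%N then Some (~~ v.1, v.2) else None.

(* Motzkin paths: a step sequence a : 'I_k -> {-1,0,1}, encoded by          *)
(* f : {ffun 'I_k -> 'I_3} with a_i = f i - 1.                               *)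
Definition mpath (k : nat) := {ffun 'I_k -> 'I_3}.

Definition step k (f : mpath k) (i : 'I_k) : int := (val (f i))%:Z - 1.

Definition seg k (f : mpath k) (i j : nat) : int :=
  \sum_(t < k | (i <= t <= j)%N) step f t.

Definition is_motzkin k (f : mpath k) : bool :=
  [forall j : 'I_k, (0 <= seg f 0 j)%R].

Definition rank k (f : mpath k) : int := \sum_(i < k) step f i.

Definition Pkr (k r : nat) : {set mpath k} :=
  [set f : mpath k | is_motzkin f & rank f == r%:Z].
Definition mkr (k r : nat) : nat := #|Pkr k r|.

Definition paired k (f : mpath k) (i j : 'I_k) : bool :=
  [&& step f i == 1, (i < j)%N, seg f i j == 0 &
      [forall t : 'I_k, ((i <= t < j)%N) ==> (seg f i t != 0)]].

Definition fedge k (f : mpath k) (i j : 'I_k) : bool := paired f i j || paired f j i.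
Definition white k (f : mpath k) (i : 'I_k) : bool :=
  (step f i == 1) && ~~ [exists j, paired f i j].

(* The action  d . p : d is placed above the 1-factor of p; the bottom vertex *)
(* (false, i) of d is identified with vertex i of the 1-factor.               *)
Section Action.
Variables (k : nat) (d : mdiag k) (f : mpath k).

Definition sedge : rel (vert k) := fun u v =>
  [|| d u == Some v, d v == Some u | [&& ~~ u.1, ~~ v.1 & fedge f u.2 v.2]].

Definition sdeg (v : vert k) : nat :=
  ((d v != None) + (~~ v.1 && [exists j, fedge f v.2 j]))%N.

(* number of closed loops: components all of whose vertices have degree 2 *)
Definition kappa : nat :=
  #|[set [set w | connect sedge v w] | v in
       [pred v : vert k | [forall w, connect sedge v w ==> (sdeg w == 2%N)]]]|.

(* resulting 1-factor on the top vertices, read back as a step sequence:     *)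
(* left end of an edge or white -> 1, right end -> -1, black -> 0             *)
Definition res_path : mpath k := [ffun i : 'I_k =>
  if [exists j : 'I_k, (i < j)%N && connect sedge (true, i) (true, j)] then inord 2
  else if [exists j : 'I_k, (j < i)%N && connect sedge (true, i) (true, j)] then inord 0
  else if [exists m : 'I_k, connect sedge (true, i) (false, m) && white f m] then inord 2
  else inord 1].

End Action.

Definition act_coef (K : fieldType) (x : K) k r (d : mdiag k) (p p' : mpath k) : K :=
  if (rank (res_path d p) == r%:Z) && (res_path d p == p') then x ^+ kappa d p else 0.

Definition rep_mx (K : fieldType) (x : K) k r (d : mdiag k) : 'M[K]_(mkr k r) :=
  \matrix_(i, j) act_coef x r d (enum_val (A := Pkr k r) j) (enum_val (A := Pkr k r) i).

Definition chi (K : fieldType) (x : K) k r (d : mdiag k) : K := \tr (rep_mx x r d).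
Arguments one_lk l k : clear implicits.

(* Main.v *)
Require Import Defs.
From HB Require Import structures.
From mathcomp Require Import all_boot all_order all_algebra.
From mathcomp Require Import zify.
Import Order.TTheory GRing.Theory Num.Theory.
Set Implicit Arguments. Unset Strict Implicit.
Local Open Scope ring_scope.

Lemma val_inord0 : val (inord 0%N : 'I_3) = 0%N. Proof. exact: (@inordK 2 0 isT). Qed.
Lemma val_inord1 : val (inord 1%N : 'I_3) = 1%N. Proof. exact: (@inordK 2 1 isT). Qed.
Lemma val_inord2 : val (inord 2%N : 'I_3) = 2%N. Proof. exact: (@inordK 2 2 isT). Qed.

Section Paths.
Variables (k : nat) (f : mpath k).

Definition pre (n : nat) : int := \sum_(t < k | (t < n)%N) step f t.

Lemma step_cases i : [\/ step f i = -1, step f i = 0 | step f i = 1].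
Proof.
rewrite /step; case: (f i) => [[|[|[|m]]] Hm] //=; by [constructor | ].
Qed.

Lemma step_bnd i : -1 <= step f i <= 1.
Proof. by case: (step_cases i) => ->. Qed.

Lemma pre0 : pre 0 = 0.
Proof. by rewrite /pre big_pred0. Qed.

Lemma preS (i : 'I_k) : pre i.+1 = pre i + step f i.
Proof.
rewrite /pre (bigD1 i) //= addrC; congr (_ + _).
apply: eq_bigl => t; rewrite ltnS -val_eqE /=.
by rewrite ltn_neqAle andbC.
Qed.

Lemma segE a b : (a <= b.+1)%N -> seg f a b = pre b.+1 - pre a.
Proof.
move=> hab; rewrite /pre (bigID (fun t : 'I_k => (t < a)%N)) /= addrC.
have -> : \sum_(i < k | (i < b.+1)%N && (i < a)%N) step f i = \sum_(t < k | (t < a)%N) step f t.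
  by apply: eq_bigl => t; apply/idP/idP => [/andP[]//|h]; rewrite h andbT; apply: leq_trans h _.
rewrite addrK /seg; apply: eq_bigl => t; rewrite ltnS -leqNgt andbC.
by [].
Qed.

Lemma pairedP (a b : 'I_k) : paired f a b ->
  [/\ step f a = 1, (a < b)%N, pre b.+1 = pre a &
     forall t : 'I_k, (a <= t < b)%N -> pre t.+1 != pre a].
Proof.
case/and4P=> /eqP s1 ab /eqP e /forallP H.
have ab1 : (a <= b.+1)%N by apply: leq_trans (ltnW ab) _.
split=> //.
  by apply/eqP; rewrite -subr_eq0 -segE // e.
move=> t /andP[hat tb]; have := H t; rewrite hat tb /= segE; last by apply: leq_trans hat _.
by rewrite subr_eq0.
Qed.

Lemma pairedI (a b : 'I_k) : step f a = 1 -> (a < b)%N -> pre b.+1 = pre a ->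
  (forall t : 'I_k, (a <= t < b)%N -> pre t.+1 != pre a) -> paired f a b.
Proof.
move=> s1 ab e H; apply/and4P; split; first by rewrite s1.
- by [].
- by rewrite segE ?e ?subrr //; apply: leq_trans (ltnW ab) _.
apply/forallP=> t; apply/implyP=> /andP[hat tb].
by rewrite segE ?subr_eq0 ?H ?hat ?tb //; apply: leq_trans hat _.
Qed.

Lemma paired_pos (a b : 'I_k) : paired f a b ->
  forall t : nat, (a <= t < b)%N -> pre a < pre t.+1.
Proof.
case/pairedP=> s1 ab e H; elim=> [|t IH] /andP[hat tb].
  have a0 : val a = 0%N by apply/eqP; rewrite -leqn0.
  have -> : 0%N = val a by [].
  by rewrite preS s1 ltrDl.
have tk : (t.+1 < k)%N by apply: ltn_trans tb (ltn_ord b).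
have -> : t.+1 = val (Ordinal tk) by [].
rewrite preS.
case: (eqVneq (val a) t.+1) => [ea|nea].
  have -> : pre (Ordinal tk) = pre a by rewrite /= -ea.
  have -> : step f (Ordinal tk) = step f a by congr (step f _); apply: val_inj.
  by rewrite s1 ltrDl.
have hat' : (a <= t)%N by rewrite -ltnS ltn_neqAle nea hat.
have := IH; rewrite hat' /= (ltn_trans (ltnSn t) tb) => /(_ isT) lt1.
have := H (Ordinal tk); rewrite hat tb => /(_ isT) ne.
have := step_bnd (Ordinal tk) => /andP[lo _].
move: ne; rewrite preS /= => ne.
rewrite lt_neqAle eq_sym ne /=.
move: lt1 lo; rewrite /=; lia.
Qed.

Lemma paired_right (a b : 'I_k) : paired f a b -> step f b = -1.
Proof.
move=> P; have := paired_pos P; case/pairedP: P => s1 ab e H pos.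
case: (posnP (val b)) => [b0|bp]; first by move: ab; rewrite b0.
have h1 : (a <= b.-1 < b)%N by apply/andP; split; lia.
have := pos _ h1; rewrite prednK // => lt.
move: e; rewrite preS => e.
have := step_bnd b => /andP[lo _].
move: lt lo e; lia.
Qed.

Lemma paired_uniq (a b c : 'I_k) : fedge f a b -> fedge f a c -> b = c.
Proof.
have R1 : forall a b c : 'I_k, paired f a b -> paired f a c -> (b < c)%N -> False.
  move=> a' b' c' /pairedP[_ ab e _] /pairedP[_ ac _ H] bc.
  by have := H b'; rewrite (ltnW ab) bc e eqxx => /(_ isT).
have R2 : forall a b c : 'I_k, paired f b a -> paired f c a -> (b < c)%N -> False.
  move=> a' b' c' Pb /pairedP[_ ca e _] bc.
  have h1 : (b' <= c'.-1 < a')%N by apply/andP; split; lia.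
  have := paired_pos Pb h1; rewrite prednK; last by lia.
  by case/pairedP: Pb => _ _ e' _; rewrite -e' e lt_irreflexive.
move=> /orP[Pb|Pb] /orP[Pc|Pc].
- case: (ltngtP b c) => [bc|cb|/val_inj//]; exfalso; [exact: R1 Pb Pc bc | exact: R1 Pc Pb cb].
- by case/pairedP: Pb => s1 _ _ _; move: (paired_right Pc); rewrite s1.
- by case/pairedP: Pc => s1 _ _ _; move: (paired_right Pb); rewrite s1.
- case: (ltngtP b c) => [bc|cb|/val_inj//]; exfalso; [exact: R2 Pb Pc bc | exact: R2 Pc Pb cb].
Qed.


Lemma motzkin_pre (i : 'I_k) : is_motzkin f -> 0 <= pre i.+1.
Proof. by move=> /forallP/(_ i); rewrite segE // pre0 subr0. Qed.

Lemma paired_left_exists (i : 'I_k) : is_motzkin f -> step f i = -1 ->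
  exists j, paired f j i.
Proof.
move=> M si; have c0 := motzkin_pre i M.
set c := pre i.+1 in c0.
have pi : pre i = c + 1 by rewrite /c preS si; lia.
have works : forall j : nat, (j <= i)%N -> pre j <= c ->
    (forall t, (j < t <= i)%N -> c < pre t) -> exists j, paired f j i.
  move=> j ji pj H.
  have jk : (j < k)%N by apply: leq_ltn_trans ji (ltn_ord i).
  have ji' : (j < i)%N.
    rewrite ltn_neqAle ji andbT; apply/negP => /eqP ej.
    by move: pj; rewrite ej pi; lia.
  have := H j.+1; rewrite ltnSn ji' => /(_ isT).
  have -> : j.+1 = (Ordinal jk).+1 by [].
  rewrite preS; have := step_bnd (Ordinal jk) => /andP[lo hi] lt.
  have sj : step f (Ordinal jk) = 1 by move: pj lt hi; rewrite /=; lia.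
  have ej : pre (Ordinal jk) = c by move: pj lt hi; rewrite /=; lia.
  exists (Ordinal jk); apply: pairedI => //.
  move=> t /andP[jt ti]; rewrite ej.
  have := H t.+1; rewrite ltnS jt ti => /(_ isT).
  by rewrite lt_def eq_sym => /andP[].
have gen : forall n, (n <= i)%N -> (forall t, (n < t <= i)%N -> c < pre t) ->
    exists j, paired f j i.
  elim=> [|n IH] ni H.
    by apply: (works 0%N) => //; rewrite pre0.
  have [le|gt] := leP (pre n.+1) c; first exact: (works n.+1 ni le H).
  apply: IH; first by lia.
  move=> t /andP[nt ti]; case: (eqVneq t n.+1) => [->//|ne]; apply: H.
  by apply/andP; split => //; lia.
by apply: (gen i) => // t; lia.
Qed.

End Paths.

Section Act.
Variables (k l : nat) (f : mpath k).
Local Notation d := (one_lk l k).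
Local Notation se := (sedge d f).

Lemma fedge_sym (a b : 'I_k) : fedge f a b = fedge f b a.
Proof. by rewrite /fedge orbC. Qed.

Lemma sedge_P (i : 'I_k) u v : se u v ->
  (u.2 == i) || fedge f i u.2 -> (v.2 == i) || fedge f i v.2.
Proof.
case/or3P => [/eqP|/eqP|/and3P[_ _ fe]].
- by rewrite /one_lk; case: ifP => // _ [<-].
- by rewrite /one_lk; case: ifP => // _ [<-].
case/orP => [/eqP eu|fi]; first by rewrite -eu fe orbT.
by rewrite (@paired_uniq _ f u.2 i v.2) ?eqxx // fedge_sym.
Qed.

Lemma reach (i : 'I_k) v : connect se (true, i) v -> (v.2 == i) || fedge f i v.2.
Proof.
move/connectP => [p pth ->].
have : ((true, i).2 == i) || fedge f i (true, i).2 by rewrite eqxx.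
elim: p (true, i) pth => [|w p IH] u //= /andP[e pth] Pu.
by apply: IH => //; apply: sedge_P e Pu.
Qed.

Lemma reach_iso (i : 'I_k) v : (l <= i)%N -> connect se (true, i) v -> v = (true, i).
Proof.
move=> li /connectP [[|w p] //= /andP[e _] _].
rewrite leqNgt in li; move: e; rewrite /sedge /one_lk /=.
case/or3P => [|/eqP|//]; first by rewrite (negbTE li).
case: ifP => // wl [_ ew].
by move: wl; rewrite ew (negbTE li).
Qed.

Lemma sedge_tb (j : 'I_k) : (j < l)%N -> se (true, j) (false, j).
Proof. by move=> jl; rewrite /sedge /one_lk /= jl eqxx. Qed.

Lemma sedge_bt (j : 'I_k) : (j < l)%N -> se (false, j) (true, j).
Proof. by move=> jl; rewrite /sedge /one_lk /= jl eqxx. Qed.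

Lemma sedge_ff (i j : 'I_k) : fedge f i j -> se (false, i) (false, j).
Proof. by move=> fe; rewrite /sedge /= fe !orbT. Qed.

Lemma fedge_step (i j : 'I_k) : fedge f i j -> step f i != 0.
Proof.
case/orP => [/pairedP[-> _ _ _]//|/paired_right ->]; by [].
Qed.

Lemma fedge_lt (i j : 'I_k) : fedge f i j -> (i < j)%N -> paired f i j.
Proof.
case/orP => // /pairedP[_ ji _ _] ij.
by move: (ltn_trans ij ji); rewrite ltnn.
Qed.

Lemma fedge_gt (i j : 'I_k) : fedge f i j -> (j < i)%N -> paired f j i.
Proof. by rewrite fedge_sym => fe ji; apply: fedge_lt. Qed.

Lemma res_ge (i : 'I_k) : (l <= i)%N -> val (res_path d f i) = 1%N.
Proof.
move=> li; rewrite /res_path ffunE.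
case: ifP => [/existsP[j /andP[ij /(reach_iso li) [ej]]]|_].
  by move: ij; rewrite ej ltnn.
case: ifP => [/existsP[j /andP[ij /(reach_iso li) [ej]]]|_].
  by move: ij; rewrite ej ltnn.
case: ifP => [/existsP[j /andP[/(reach_iso li) //]]|_].
by rewrite /= inordK.
Qed.

Hypothesis M : is_motzkin f.
Hypothesis tail : forall j : 'I_k, (l <= j)%N -> step f j = 0.

Lemma lt_l (j : 'I_k) : step f j != 0 -> (j < l)%N.
Proof. by move=> s; rewrite ltnNge; apply/negP => /tail; apply/eqP. Qed.

Lemma reach_top (i j : 'I_k) : connect se (true, i) (true, j) -> j != i -> fedge f i j.
Proof. by move=> /reach /= /orP[/eqP->|//]; rewrite eqxx. Qed.

Lemma reach_pair (i j : 'I_k) : fedge f i j -> connect se (true, i) (true, j).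
Proof.
move=> fe.
have il := lt_l (fedge_step fe).
have jl : (j < l)%N by apply: lt_l; apply: (fedge_step (j := i)); rewrite fedge_sym.
apply: (connect_trans (connect1 (sedge_tb il))).
apply: (connect_trans (connect1 (sedge_ff fe))).
exact: connect1 (sedge_bt jl).
Qed.

Lemma res_fix (i : 'I_k) : res_path d f i = f i.
Proof.
apply: val_inj; rewrite /res_path ffunE.
have sv : step f i = (val (f i))%:Z - 1 by [].
case: (step_cases f i) => si.
-
  have fi : val (f i) = 0%N by move: sv; rewrite si; lia.
  have [j Pj] := paired_left_exists M si.
  case: ifP => [/existsP[j' /andP[ij' c]]|_].
    have := fedge_lt (reach_top c _) ij'.
    rewrite neq_ltn ij' orbT => /(_ isT) /pairedP[s1 _ _ _].
    by move: si; rewrite s1.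
  case: ifP => [_|/negbT/negP E2]; first by rewrite /= inordK ?fi.
  exfalso; apply: E2; apply/existsP; exists j; case/pairedP: (Pj) => _ ji _ _; rewrite ji /=.
  by apply: reach_pair; rewrite /fedge Pj orbT.
-
  have fi : val (f i) = 1%N by move: sv; rewrite si; lia.
  case: ifP => [/existsP[j' /andP[ij' c]]|_].
    by have := fedge_step (reach_top c _); rewrite neq_ltn ij' orbT si => /(_ isT).
  case: ifP => [/existsP[j' /andP[ij' c]]|_].
    by have := fedge_step (reach_top c _); rewrite neq_ltn ij' si => /(_ isT).
  case: ifP => [/existsP[m /andP[c w]]|_]; last by rewrite /= inordK ?fi.
  move: (reach c) => /= /orP[/eqP em|fe]; last by move: (fedge_step fe); rewrite si.
  by move: w; rewrite em /white si.
-
  have fi : val (f i) = 2%N by move: sv; rewrite si; lia.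
  case: ifP => [_|E1]; first by rewrite /= inordK ?fi.
  case: ifP => [/existsP[j' /andP[ji c]]|_].
    have := fedge_gt (reach_top c _) ji.
    rewrite neq_ltn ji => /(_ isT) /paired_right.
    by rewrite si.
  case: ifP => [_|/negbT/negP E3]; first by rewrite /= inordK ?fi.
  exfalso; apply: E3.
  have il : (i < l)%N by apply: lt_l; rewrite si.
  case W : (white f i).
    by apply/existsP; exists i; rewrite W andbT; apply: connect1; apply: sedge_tb.
  move: W; rewrite /white si eqxx /= => /negbFE /existsP[j Pj].
  exfalso; move: E1 => /negbT/negP; apply; apply/existsP; exists j.
  case/pairedP: (Pj) => _ ij _ _; rewrite ij /=.
  by apply: reach_pair; rewrite /fedge Pj.
Qed.

End Act.

Lemma kappa0 k l (f : mpath k) : kappa (one_lk l k) f = 0%N.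
Proof.
apply/eqP; rewrite -leqn0; apply: leq_trans (leq_imset_card _ _) _.
rewrite leqn0; apply/eqP; apply: eq_card0 => -[b j]; rewrite !inE.
apply/negbTE; rewrite negb_forall; apply/existsP.
have top : forall j' : 'I_k, sdeg (one_lk l k) f (true, j') != 2%N.
  by move=> j'; rewrite /sdeg /=; case: (_ != None).
case: b.
  by exists (true, j); rewrite connect0 top.
case: (ltnP j l) => jl.
  by exists (true, j); rewrite connect1 ?top //; apply: sedge_bt.
exists (false, j); rewrite connect0 /sdeg /one_lk /=.
by rewrite (ltnNge j l) jl /=; case: [exists _, _].
Qed.

Lemma pre_ge k (f : mpath k) n : (k <= n)%N -> pre f n = pre f k.
Proof. by move=> kn; apply: eq_bigl => t; rewrite (ltn_ord t) (leq_trans (ltn_ord t) kn). Qed.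

Lemma motzP k (f : mpath k) : is_motzkin f <-> (forall n, 0 <= pre f n).
Proof.
split=> [M n|H].
  wlog nk : n / (n <= k)%N.
    move=> W; case: (leqP n k) => [|kn]; first exact: W.
    by rewrite pre_ge ?W // ltnW.
  case: n nk => [|m mk]; first by rewrite pre0.
  by have := motzkin_pre (Ordinal mk) M.
by apply/forallP => j; rewrite segE // pre0 subr0.
Qed.

Section Ext.
Variables (k l : nat) (lk : (l <= k)%N).

Definition ext (g : mpath l) : mpath k :=
  [ffun i : 'I_k => if insub (val i) is Some j then g j else inord 1].
Definition restr (p : mpath k) : mpath l := [ffun j : 'I_l => p (widen_ord lk j)].

Definition Fn (g : mpath l) (n : nat) : int :=
  if insub n is Some j then step g j else 0.

Lemma sum_ext (g : mpath l) (P : pred nat) :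
  \sum_(t < k | P t) step (ext g) t = \sum_(t < l | P t) step g t.
Proof.
have -> : \sum_(t < l | P t) step g t = \sum_(t < l | P t) Fn g t.
  by apply: eq_bigr => t _; rewrite /Fn valK.
rewrite (big_ord_widen_cond k P (Fn g) lk).
rewrite [LHS](bigID (fun t : 'I_k => (t < l)%N)) /=.
rewrite [X in _ + X]big1 ?addr0.
  apply: eq_bigr => t _; rewrite /step /Fn ffunE.
  case: insubP => [j _ _|]; first by [].
  by rewrite val_inord1.
move=> t /andP[_ tl]; rewrite /step ffunE.
case: insubP => [j jl _|_]; first by rewrite jl in tl.
by rewrite val_inord1.
Qed.

Lemma pre_ext (g : mpath l) n : pre (ext g) n = pre g n.
Proof. exact: (sum_ext g (fun t => (t < n)%N)). Qed.

Lemma rank_ext (g : mpath l) : rank (ext g) = rank g.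
Proof. exact: (sum_ext g (fun _ => true)). Qed.

Lemma motz_ext (g : mpath l) : is_motzkin (ext g) = is_motzkin g.
Proof.
apply/idP/idP => /motzP H; apply/motzP => n; have := H n; by rewrite pre_ext.
Qed.

Definition zt (p : mpath k) := [forall j : 'I_k, (l <= j)%N ==> (val (p j) == 1%N)].

Lemma zt_ext g : zt (ext g).
Proof.
apply/forallP => j; apply/implyP => lj; rewrite ffunE.
case: insubP => [i il _|_]; first by rewrite leqNgt il in lj.
by rewrite val_inord1.
Qed.

Lemma ext_inj : injective ext.
Proof.
move=> g1 g2 e; apply/ffunP => j.
by have := congr1 (fun p : mpath k => p (widen_ord lk j)) e; rewrite !ffunE /= valK.
Qed.

Lemma ext_restr p : zt p -> ext (restr p) = p.
Proof.
move=> /forallP z; apply/ffunP => i; rewrite ffunE.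
case: insubP => [j jl vj|nl]; first by rewrite ffunE; congr (p _); apply: val_inj.
apply: val_inj; rewrite val_inord1.
by have := z i; rewrite leqNgt nl => /eqP.
Qed.

Lemma card_zt r : #|[set p in Pkr k r | zt p]| = mkr l r.
Proof.
have -> : [set p in Pkr k r | zt p] = ext @: Pkr l r.
  apply/setP => p; rewrite !inE; apply/andP/imsetP.
    case=> Pp z; exists (restr p); last by rewrite ext_restr.
    move: Pp; rewrite !inE; set g := restr p.
    by rewrite -(ext_restr z) -/g rank_ext motz_ext.
  case=> g Pg ->; split; last exact: zt_ext; move: Pg.
  by rewrite !inE rank_ext motz_ext.
by rewrite card_imset //; exact: ext_inj.
Qed.

End Ext.

Lemma fix_iff k l (p : mpath k) : is_motzkin p ->
  (res_path (one_lk l k) p == p) = zt l p.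
Proof.
move=> M; apply/eqP/idP => [e|z].
  apply/forallP => j; apply/implyP => lj.
  by have := res_ge p lj; rewrite e => ->.
apply/ffunP => i; apply: res_fix => // j lj.
move/forallP: z => /(_ j); rewrite lj /= => /eqP vj.
by rewrite /step; move: vj => /= ->.
Qed.

Lemma rank_le l (g : mpath l) : rank g <= l%:Z.
Proof.
apply: le_trans (_ : \sum_(i < l) (1 : int) <= _).
  by apply: ler_sum => i _; have := step_bnd g i => /andP[].
by rewrite sumr_const card_ord natz.
Qed.

Lemma mkr0 l r : (l < r)%N -> mkr l r = 0%N.
Proof.
move=> lr; apply: eq_card0 => g; rewrite !inE.
apply/negbTE/negP => /andP[_ /eqP e].
by have := rank_le g; rewrite e lez_nat leqNgt lr.
Qed.

Theorem mainTheorem12 (K : fieldType) (x : K) (k r l : nat) :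
  (r <= k)%N -> (l <= k)%N ->
  chi x r (one_lk l k) = (if (r <= l)%N then (mkr l r)%:R else 0).
Proof.
move=> rk lk.
rewrite /chi /mxtrace.
under eq_bigr do rewrite mxE.
rewrite /mkr -(big_enum_val (fun p => act_coef x r (one_lk l k) p p)).
rewrite (eq_bigr (fun p => if zt l p then 1 else 0)); last first.
  move=> p; rewrite inE => /andP[M /eqP rp].
  rewrite /act_coef kappa0 expr0 -(fix_iff l M).
  by case E: (res_path (one_lk l k) p == p); rewrite ?andbF ?andbT ?(eqP E) ?rp ?eqxx.
have -> : \sum_(p in Pkr k r) (if zt l p then (1:K) else 0) =
    \sum_(p in [set p in Pkr k r | zt l p]) 1.
  rewrite big_mkcond [RHS]big_mkcond; apply: eq_bigr => p _.
  rewrite [in RHS]inE; by case: (p \in Pkr k r); case: (zt l p).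
rewrite sumr_const (card_zt lk).
case: leqP => // lr; by rewrite mkr0.
Qed.
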